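(* Let $K$ be a field of characteristic $0$ and let $m=x_1^{\alpha_1}\cdots x_n^{\alpha_n}$ be a monomial with $\alpha_i\ge 1$ for all $i$. The group of invariants $\{A\in GL_n(K): m(A.x)=m(x)\}$ of $m$ is generated by: (i) the diagonal matrices $\mathrm{diag}(\lambda_1,\ldots,\lambda_n)$ with $\prod_{i=1}^n\lambda_i^{\alpha_i}=1$; (ii) the permutation matrices which map each variable $x_i$ to a variable $x_{\pi(i)}$ with $\alpha_i=\alpha_{\pi(i)}$.
   Context: $m(A.x)$ denotes the polynomial obtained from $m$ by the linear change of variables $x\mapsto Ax$. *)

(* Defs.v *)
From HB Require Import structures.
From mathcomp Require Import all_boot all_order all_algebra all_fingroup.
From mathcomp Require Import mpoly.
Set Implicit Arguments. Unset Strict Implicit. Unset Printing Implicit Defensive.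
Import GRing.Theory.
Local Open Scope ring_scope.

Definition monom (K : fieldType) (n : nat) (alpha : 'I_n -> nat) : {mpoly K[n]} :=
  \prod_(i < n) 'X_i ^+ alpha i.

Definition lin_forms (K : fieldType) (n : nat) (A : 'M[K]_n) : n.-tuple {mpoly K[n]} :=
  [tuple \sum_(j < n) A i j *: 'X_j | i < n].

Definition lin_change (K : fieldType) (n : nat) (A : 'M[K]_n) (p : {mpoly K[n]}) :
  {mpoly K[n]} := comp_mpoly (lin_forms A) p.

Inductive gen_by (K : fieldType) (n : nat) (S : 'M[K]_n -> Prop) : 'M[K]_n -> Prop :=
  | gen_one : gen_by S 1%:M
  | gen_in A : S A -> gen_by S A
  | gen_mul A B : gen_by S A -> gen_by S B -> gen_by S (A *m B)
  | gen_inv A : gen_by S A -> gen_by S (invmx A).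

Definition diag_gen (K : fieldType) (n : nat) (alpha : 'I_n -> nat) (A : 'M[K]_n) : Prop :=
  exists d : 'rV[K]_n, A = diag_mx d /\ \prod_(i < n) d 0 i ^+ alpha i = 1.

Definition perm_gen (K : fieldType) (n : nat) (alpha : 'I_n -> nat) (A : 'M[K]_n) : Prop :=
  exists s : 'S_n, A = perm_mx s /\ forall i, alpha i = alpha (s i).

Definition invariant_gens (K : fieldType) (n : nat) (alpha : 'I_n -> nat) (A : 'M[K]_n) : Prop :=
  diag_gen alpha A \/ perm_gen alpha A.

(* Main.v *)
Require Import Defs.
From HB Require Import structures.
From mathcomp Require Import all_boot all_order all_algebra all_fingroup.
From mathcomp Require Import mpoly.
Import GRing.Theory.
Local Open Scope ring_scope.

Section Aux.
Variables (K : fieldType) (n : nat).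

Lemma comp_comp (p : {mpoly K[n]}) (lp lq : n.-tuple {mpoly K[n]}) :
  comp_mpoly lq (comp_mpoly lp p) = comp_mpoly [tuple comp_mpoly lq (tnth lp i) | i < n] p.
Proof.
rewrite (comp_mpolyEX p lp) (comp_mpolyEX p) raddf_sum /=; apply: eq_bigr => m _.
rewrite comp_mpolyZ !comp_mpolyX rmorph_prod /=.
congr (_ *: _); apply: eq_bigr => i _; by rewrite rmorphXn tnth_map tnth_ord_tuple.
Qed.

Lemma lin_change_comp (A B : 'M[K]_n) p :
  lin_change A (lin_change B p) = lin_change (B *m A) p.
Proof.
rewrite /lin_change comp_comp; congr comp_mpoly.
apply: eq_from_tnth => i; rewrite !tnth_map !tnth_ord_tuple.
rewrite raddf_sum /=.
under eq_bigr => j _ do rewrite comp_mpolyZ comp_mpolyXU -tnth_nth tnth_map tnth_ord_tuple scaler_sumr.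
rewrite exchange_big /=; apply: eq_bigr => k _.
rewrite mxE scaler_suml; apply: eq_bigr => j _; by rewrite scalerA.
Qed.

Lemma lin_change1 p : lin_change (1%:M : 'M[K]_n) p = p.
Proof.
rewrite /lin_change -[RHS]comp_mpoly_id; congr comp_mpoly.
apply: eq_from_tnth => i; rewrite !tnth_map !tnth_ord_tuple.
rewrite (bigD1 i) //= big1 ?addr0 => [|j /negbTE ji]; rewrite mxE.
  by rewrite eqxx scale1r.
by rewrite eq_sym ji scale0r.
Qed.

Lemma lin_change_diag (d : 'rV[K]_n) m :
  lin_change (diag_mx d) 'X_[m] = (\prod_(i < n) d 0 i ^+ m i) *: 'X_[m].
Proof.
rewrite /lin_change comp_mpolyX.
under eq_bigr => i _.
  rewrite tnth_map tnth_ord_tuple (bigD1 i) //= big1 ?addr0 => [|j /negbTE ji]; last first.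
    by rewrite mxE eq_sym ji mulr0n scale0r.
  rewrite mxE eqxx mulr1n exprZn.
  over.
by rewrite scaler_prod -mpolyXE_id.
Qed.

Lemma perm_mx_entry (s : 'S_n) i j : (perm_mx s : 'M[K]_n) i j = (s i == j)%:R.
Proof. by rewrite perm_mxEsub !mxE. Qed.

Definition mperm (s : 'S_n) (m : 'X_{1..n}) : 'X_{1..n} :=
  [multinom m ((s^-1)%g k) | k < n].

Lemma lin_change_perm (s : 'S_n) m :
  lin_change (perm_mx s) 'X_[m] = 'X_[mperm s m] :> {mpoly K[n]}.
Proof.
rewrite /lin_change comp_mpolyX (@mpolyXE _ _ s).
apply: eq_bigr => i _; rewrite tnth_map tnth_ord_tuple mnmE permK.
rewrite (bigD1 (s i)) //= big1 ?addr0 => [|j /negbTE ji]; last first.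
  by rewrite perm_mx_entry eq_sym ji scale0r.
by rewrite perm_mx_entry eqxx scale1r.
Qed.

Lemma scaleX_eq (c : K) m1 m2 :
  c *: 'X_[m1] = 'X_[m2] :> {mpoly K[n]} -> c = 1 /\ m1 = m2.
Proof.
move=> /(congr1 (mcoeff m2)); rewrite mcoeffZ !mcoeffX eqxx.
have [->|ne] := eqVneq m1 m2; first by rewrite mulr1.
by rewrite mulr0 => /eqP; rewrite eq_sym oner_eq0.
Qed.


Lemma comp_sum (lq : n.-tuple {mpoly K[n]}) (F : 'I_n -> {mpoly K[n]}) :
  comp_mpoly lq (\sum_(k < n) F k) = \sum_(k < n) comp_mpoly lq (F k).
Proof. exact: raddf_sum. Qed.

Lemma mcoeff_sum m (F : 'I_n -> {mpoly K[n]}) :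
  (\sum_(k < n) F k)@_m = \sum_(k < n) (F k)@_m.
Proof. exact: raddf_sum. Qed.

Lemma lin_changeZ (A : 'M[K]_n) c p : lin_change A (c *: p) = c *: lin_change A p.
Proof. by rewrite /lin_change comp_mpolyZ. Qed.

Definition malpha (alpha : 'I_n -> nat) : 'X_{1..n} := [multinom alpha i | i < n].

Lemma monomE alpha : monom K alpha = 'X_[malpha alpha].
Proof. by rewrite mpolyXE_id; apply: eq_bigr => i _; rewrite mnmE. Qed.

Lemma gen_ok (alpha : 'I_n -> nat) (A : 'M[K]_n) :
  (forall i, (1 <= alpha i)%N) ->
  gen_by (invariant_gens alpha) A ->
  A \in unitmx /\ lin_change A (monom K alpha) = monom K alpha.
Proof.
move=> ha; elim => [|B [[d [-> hd]]|[s [-> hs]]] | B C _ [uB iB] _ [uC iC] | B _ [uB iB]].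
- by rewrite unitmx1 lin_change1.
- split.
    rewrite unitmxE det_diag unitfE; apply/prodf_neq0 => i _; apply/eqP => d0.
    move: hd; rewrite (bigD1 i) //= d0 expr0n; have := ha i.
    by case: (alpha i) => // k _; rewrite mul0r => /eqP; rewrite eq_sym oner_eq0.
  rewrite monomE lin_change_diag.
  under eq_bigr => i _ do rewrite mnmE.
  by rewrite hd scale1r.
- split; first exact: unitmx_perm.
  rewrite monomE lin_change_perm; congr 'X_[_]; apply/mnmP => k.
  by rewrite !mnmE hs permKV.
- by split; [rewrite unitmx_mul uB uC | rewrite -lin_change_comp iB iC].
- split; first by rewrite unitmx_inv.
  by rewrite -{1}iB lin_change_comp mulmxV // lin_change1.
Qed.

Lemma key (alpha : 'I_n -> nat) (A : 'M[K]_n) :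
  (forall i, (1 <= alpha i)%N) ->
  A \in unitmx -> lin_change A (monom K alpha) = monom K alpha ->
  gen_by (invariant_gens alpha) A.
Proof.
move=> ha uA inv.
pose Z (j : 'I_n) : n.-tuple {mpoly K[n]} := [tuple if i == j then 0 else 'X_i | i < n].
pose P j i := [forall k, (k != j) ==> (A i k == 0)].
have H : forall j, exists i, P j i.
  move=> j.
  have : comp_mpoly (Z j) (lin_change A (monom K alpha)) = 0.
    rewrite inv monomE comp_mpolyX (bigD1 j) //= tnth_map tnth_ord_tuple eqxx mnmE.
    by have := ha j; case: (alpha j) => // k _; rewrite expr0n mul0r.
  rewrite monomE /lin_change comp_mpolyX rmorph_prod => /eqP /prodf_eq0 [i _].
  rewrite rmorphXn expf_eq0 mnmE => /andP [_ /eqP h0].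
  exists i; apply/forallP => k; apply/implyP => kj.
  have := congr1 (mcoeff U_(k)) h0.
  change ((comp_mpoly (Z j) (tnth (lin_forms A) i))@_U_(k) = 0@_U_(k) -> A i k == 0).
  rewrite mcoeff0 tnth_map tnth_ord_tuple comp_sum mcoeff_sum.
  rewrite (bigD1 k) //= big1 ?addr0 => [|k' k'k].
    by rewrite comp_mpolyZ mcoeffZ comp_mpolyXU -tnth_nth tnth_map tnth_ord_tuple (negbTE kj) mcoeffXU eqxx mulr1 => ->.
  rewrite comp_mpolyZ mcoeffZ comp_mpolyXU -tnth_nth tnth_map tnth_ord_tuple.
  by case: ifP => _; rewrite ?mcoeff0 ?mcoeffXU ?(negbTE k'k) mulr0.
pose sg j := xchoose (H j).
have sgP j : P j (sg j) := xchooseP (H j).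
have sginj : injective sg.
  move=> j j' e; apply/eqP/negPn/negP => jj'.
  have z : forall k, A (sg j) k = 0.
    move=> k; have [kj|kj] := eqVneq k j.
      by move: (sgP j') => /forallP /(_ k); rewrite e kj (negbTE jj') /= => /eqP.
    by move: (sgP j) => /forallP /(_ k); rewrite kj /= => /eqP.
  move: uA; rewrite unitmxE (expand_det_row _ (sg j)) big1 ?unitr0 // => k _.
  by rewrite z mul0r.
pose s0 : 'S_n := perm sginj.
pose s := (s0^-1)%g.
have rowz i k : k != s i -> A i k = 0.
  move=> ks; move: (sgP (s i)) => /forallP /(_ k).
  have -> : sg (s i) = i by rewrite -(permE sginj) permKV.
  by rewrite ks /= => /eqP.
pose d := \row_i A i (s i).
have AE : A = diag_mx d *m perm_mx s.
  apply/matrixP => i k; rewrite mul_diag_mx mxE perm_mx_entry !mxE.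
  have [<-|ne] := eqVneq (s i) k; first by rewrite mulr1.
  by rewrite mulr0 rowz // eq_sym.
move: inv; rewrite AE -lin_change_comp !monomE lin_change_diag lin_changeZ lin_change_perm.
move=> /scaleX_eq [hc hm].
apply: gen_mul; apply: gen_in; [left | right].
  by exists d; split => //; rewrite -[in RHS]hc; apply: eq_bigr => i _; rewrite mnmE.
exists s; split => // i.
have := congr1 (fun m : 'X_{1..n} => m (s i)) hm; rewrite /= !mnmE.
by rewrite permK.
Qed.

End Aux.

Theorem lemma4 (K : fieldType) (n : nat) (alpha : 'I_n -> nat) :
  [pchar K] =i pred0 ->
  (forall i, (1 <= alpha i)%N) ->
  forall A : 'M[K]_n,
    (A \in unitmx /\ lin_change A (monom K alpha) = monom K alpha) <->
    gen_by (invariant_gens alpha) A.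
Proof.
move=> _ ha A; split; first by case; exact: key.
exact: gen_ok.
Qed.
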